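(* Let $H$ be a complex Hilbert space and let $P \in \mathcal{L}(H)$ be a positive operator (i.e. $\langle Px,x\rangle \ge 0$ for all $x\in H$). Then: (i) $P$ satisfies the property $\mathcal{N}^*$ if and only if $[P]$ is an eigenvalue of $P$; (ii) $P$ satisfies the property $\mathcal{N}^*$ if and only if $[P]$ is an extreme point of the numerical range $W(P)$.
   Context: $\mathcal{L}(H)$ is the space of bounded linear operators on $H$. For $T \in \mathcal{L}(H)$, $[T] := \inf_{\|x\| = 1} \|Tx\|$; $T$ satisfies the property $\mathcal{N}^*$ if there exists $x_0 \in H$ with $\|x_0\| = 1$ and $\|Tx_0\| = [T]$. The numerical range is $W(T) := \{\langle Tx, x\rangle : x \in H,\ \|x\| = 1\} \subset \mathbb{C}$ (a convex set). A point $\alpha$ of a convex set $A \subset \mathbb{C}$ is an extreme point of $A$ if $\alpha = t u + (1-t) v$ with $u, v \in A$, $0<t<1$ implies $\alpha = u = v$. *)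

(* Defs.v *)
From HB Require Import structures.
From mathcomp Require Import all_boot all_order all_algebra.
From mathcomp Require Import complex.
From mathcomp Require Import classical_sets reals.
Set Implicit Arguments. Unset Strict Implicit. Unset Printing Implicit Defensive.
Import Order.TTheory GRing.Theory Num.Theory.
Local Open Scope ring_scope.
Local Open Scope classical_set_scope.
Local Open Scope complex_scope.

Section Hilbert.
Variables (R : realType) (V : lmodType R[i]) (ip : V -> V -> R[i]).

(* <.,.> is linear in the first argument, conjugate symmetric, positive definite.
   The order on R[i] is the standard one: 0 <= z iff z is real and nonnegative. *)
Definition inner_product : Prop :=
  [/\ (forall (a : R[i]) (x y z : V), ip (a *: x + y) z = a * ip x z + ip y z),
      (forall x y : V, ip y x = (ip x y)^*),
      (forall x : V, 0 <= ip x x)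
    & (forall x : V, ip x x = 0 -> x = 0)].

Definition hnorm (x : V) : R := Num.sqrt (complex.Re (ip x x)).

Definition hcomplete : Prop :=
  forall u : nat -> V,
    (forall e : R, 0 < e -> exists N : nat, forall m n : nat,
         (N <= m)%N -> (N <= n)%N -> hnorm (u m - u n) < e) ->
    exists l : V, forall e : R, 0 < e -> exists N : nat, forall n : nat,
         (N <= n)%N -> hnorm (u n - l) < e.

Definition is_hilbert : Prop := inner_product /\ hcomplete.

Definition bounded_linear (T : V -> V) : Prop :=
  (forall (a : R[i]) (x y : V), T (a *: x + y) = a *: T x + T y) /\
  (exists M : R, forall x : V, hnorm (T x) <= M * hnorm x).

Definition positive_op (T : V -> V) : Prop := forall x : V, 0 <= ip (T x) x.

Definition lower_bound (T : V -> V) : R :=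
  inf [set hnorm (T x) | x in [set x : V | hnorm x = 1]].

Definition propNstar (T : V -> V) : Prop :=
  exists x0 : V, hnorm x0 = 1 /\ hnorm (T x0) = lower_bound T.

Definition is_eigenvalue (T : V -> V) (l : R[i]) : Prop :=
  exists x : V, x != 0 /\ T x = l *: x.

Definition num_range (T : V -> V) : set R[i] :=
  [set ip (T x) x | x in [set x : V | hnorm x = 1]].

End Hilbert.

Definition extreme_point (R : realType) (A : set R[i]) (a : R[i]) : Prop :=
  A a /\
  forall (u v : R[i]) (t : R), A u -> A v -> 0 < t < 1 ->
    a = t%:C * u + (1 - t)%:C * v -> a = u /\ a = v.

(* Main.v *)
Require Import Defs.
From HB Require Import structures.
From mathcomp Require Import all_boot all_order all_algebra.
From mathcomp Require Import complex.
From mathcomp Require Import boolp classical_sets reals.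
From mathcomp Require Import lra ring.
Set Implicit Arguments. Unset Strict Implicit. Unset Printing Implicit Defensive.
Import Order.TTheory GRing.Theory Num.Theory.
Local Open Scope ring_scope.
Local Open Scope classical_set_scope.
Local Open Scope complex_scope.

Section Basic.
Variables (R : realType) (V : lmodType R[i]) (ip : V -> V -> R[i]).
Hypothesis Hip : inner_product ip.

Lemma ipDZ a x y z : ip (a *: x + y) z = a * ip x z + ip y z.
Proof. by case: Hip. Qed.
Lemma ipC x y : ip y x = (ip x y)^*.
Proof. by case: Hip. Qed.
Lemma ip_ge0 x : 0 <= ip x x.
Proof. by case: Hip. Qed.
Lemma ip_eq0 x : ip x x = 0 -> x = 0.
Proof. by case: Hip => _ _ _; apply. Qed.

Lemma ip0l z : ip 0 z = 0.
Proof.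
have := ipDZ 1 0 0 z; rewrite scaler0 addr0 mul1r => /eqP.
by rewrite -subr_eq0 opprD addrA subrr sub0r oppr_eq0 => /eqP.
Qed.
Lemma ipDl x y z : ip (x + y) z = ip x z + ip y z.
Proof. by have := ipDZ 1 x y z; rewrite scale1r mul1r. Qed.
Lemma ipZl a x z : ip (a *: x) z = a * ip x z.
Proof. by have := ipDZ a x 0 z; rewrite addr0 ip0l addr0. Qed.
Lemma ipDr x y z : ip z (x + y) = ip z x + ip z y.
Proof. by rewrite [LHS]ipC ipDl (ipC x z) (ipC y z) rmorphD. Qed.
Lemma ipZr a x z : ip z (a *: x) = a^* * ip z x.
Proof. by rewrite [LHS]ipC ipZl (ipC x z) rmorphM. Qed.
Lemma ipNl x z : ip (- x) z = - ip x z.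
Proof. by rewrite -scaleN1r ipZl mulN1r. Qed.
Lemma ipNr x z : ip z (- x) = - ip z x.
Proof. by rewrite [LHS]ipC ipNl (ipC x z) rmorphN. Qed.

Definition B x y := complex.Re (ip x y).
Definition N x := B x x.

Lemma BDl x y z : B (x + y) z = B x z + B y z.
Proof. by rewrite /B ipDl; case: (ip x z) => ? ?; case: (ip y z). Qed.
Lemma BDr x y z : B z (x + y) = B z x + B z y.
Proof. by rewrite /B ipDr; case: (ip z x) => ? ?; case: (ip z y). Qed.
Lemma BZl c x z : B (c%:C *: x) z = c * B x z.
Proof. by rewrite /B ipZl; case: (ip x z) => ? ? /=; simpc. Qed.
Lemma BZr c x z : B z (c%:C *: x) = c * B z x.
Proof. by rewrite /B ipZr; case: (ip z x) => a b /=; simpc. Qed.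
Lemma BNl x z : B (- x) z = - B x z.
Proof. by rewrite /B ipNl; case: (ip x z). Qed.
Lemma BNr x z : B z (- x) = - B z x.
Proof. by rewrite /B ipNr; case: (ip z x). Qed.
Lemma Bsym x y : B x y = B y x.
Proof. by rewrite /B ipC; case: (ip y x). Qed.
Lemma ipxx x : ip x x = (N x)%:C.
Proof.
have := ger0_Im (ip_ge0 x); rewrite /N /B; case: (ip x x) => a b /= ->; by [].
Qed.
Lemma N_ge0 x : 0 <= N x.
Proof. by have := ip_ge0 x; rewrite ipxx ler0c. Qed.
Lemma N_eq0 x : N x = 0 -> x = 0.
Proof. by move=> h; apply: ip_eq0; rewrite ipxx h. Qed.

Lemma selfadj_gen (P : V -> V) :
  (forall a x y, P (a *: x + y) = a *: P x + P y) ->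
  (forall x, 0 <= ip (P x) x) ->
  forall x y, B (P x) y = B x (P y).
Proof.
move=> Pl Pp x y.
have PD u v : P (u + v) = P u + P v by have := Pl 1 u v; rewrite !scale1r.
have PZ a u : P (a *: u) = a *: P u.
  have P0 : P 0 = 0.
    have := PD 0 0; rewrite addr0 => /eqP; rewrite -subr_eq0 opprD addrA subrr sub0r oppr_eq0.
    by move/eqP.
  by have := Pl a u 0; rewrite addr0 P0 addr0.
have := ger0_Im (Pp (x + 'i *: y)).
rewrite PD PZ !ipDl !ipDr !ipZl !ipZr.
have := ger0_Im (Pp x); have := ger0_Im (Pp y).
rewrite /B (ipC (P y) x).
case: (ip (P x) x) => a1 a2; case: (ip (P y) y) => b1 b2;
case: (ip (P x) y) => c1 c2; case: (ip (P y) x) => d1 d2 /=.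
move=> -> ->; simpc; lra.
Qed.

Lemma kernel_gen (C : V -> V) :
  (forall u v, C (u + v) = C u + C v) ->
  (forall (c : R) u, C (c%:C *: u) = c%:C *: C u) ->
  (forall u v, B (C u) v = B u (C v)) ->
  (forall u, 0 <= B (C u) u) ->
  forall x, B (C x) x = 0 -> C x = 0.
Proof.
move=> CD CZ Cs Cp x h0.
have key t : 0 <= 2 * t * N (C x) + t^+2 * B (C (C x)) (C x).
  have := Cp (x + t%:C *: C x); rewrite CD CZ !BDl !BDr !BZl !BZr h0.
  rewrite (Cs (C x) x) /N.
  by move=> h; apply: (le_trans h); rewrite le_eqVlt; apply/orP; left; apply/eqP; ring.
apply: N_eq0.
have a0 := N_ge0 (C x); have b0 := Cp (C x).
set a := N (C x) in key a0 *; set b := B (C (C x)) (C x) in key b0.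
have := key (- (a / (b + 1))).
have hb : b + 1 != 0 by rewrite gt_eqF // ltr_pwDr.
set t := a / (b + 1).
have ht : t * (b + 1) = a by rewrite /t divfK.
have t0 : 0 <= t by rewrite /t divr_ge0 // addr_ge0.
move=> h; nra.
Qed.

Lemma normalize_gen (f : V -> R) (a : R) :
  (forall c x, f (c%:C *: x) = c^+2 * f x) ->
  (forall y, N y = 1 -> a <= f y) -> forall x, a * N x <= f x.
Proof.
move=> fZ h x.
have [Nx0|Nx0] := eqVneq (N x) 0.
  rewrite Nx0 mulr0.
  have -> : x = 0 by apply: N_eq0.
  by have := fZ 0 0; rewrite scaler0 expr0n /= mul0r => ->.
have Npos : 0 < N x by rewrite lt_neqAle eq_sym Nx0 N_ge0.
set c := (Num.sqrt (N x))^-1.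
have hc : c^+2 * N x = 1.
  by rewrite /c exprVn sqr_sqrtr ?N_ge0 // mulVf.
have := h (c%:C *: x); rewrite /N BZl BZr mulrA -expr2 fZ.
move=> /(_ hc) ha.
move: hc ha Npos; rewrite /N.
move: (c^+2) (f x) (B x x) => C F M.
move=> hc ha Mp.
have e : C * F * M = F by rewrite mulrAC hc mul1r.
nra.
Qed.

Variable P : V -> V.
Hypothesis Pl : forall a x y, P (a *: x + y) = a *: P x + P y.
Hypothesis Pp : forall x, 0 <= ip (P x) x.

Lemma PD u v : P (u + v) = P u + P v.
Proof. by have := Pl 1 u v; rewrite !scale1r. Qed.
Lemma P0 : P 0 = 0.
Proof.
have := PD 0 0; rewrite addr0 => /eqP.
by rewrite -subr_eq0 opprD addrA subrr sub0r oppr_eq0 => /eqP.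
Qed.
Lemma PZ a u : P (a *: u) = a *: P u.
Proof. by have := Pl a u 0; rewrite addr0 P0 addr0. Qed.
Lemma PN u : P (- u) = - P u.
Proof. by rewrite -scaleN1r PZ scaleN1r. Qed.

Definition Q x := B (P x) x.
Lemma Q_ge0 x : 0 <= Q x.
Proof. by have := Pp x; rewrite /Q /B; case: (ip (P x) x) => a b; rewrite lecE /= => /andP[]. Qed.
Lemma ipP x : ip (P x) x = (Q x)%:C.
Proof. have := ger0_Im (Pp x); rewrite /Q /B; by case: (ip (P x) x) => a b /= ->. Qed.
Lemma Psa x y : B (P x) y = B x (P y).
Proof. exact: selfadj_gen Pl Pp x y. Qed.
Lemma NZ c x : N (c%:C *: x) = c^+2 * N x.
Proof. by rewrite /N BZl BZr mulrA -expr2. Qed.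
Lemma QZ c x : Q (c%:C *: x) = c^+2 * Q x.
Proof. by rewrite /Q PZ BZl BZr mulrA -expr2. Qed.
Lemma NPZ c x : N (P (c%:C *: x)) = c^+2 * N (P x).
Proof. by rewrite PZ NZ. Qed.
Lemma N0 : N 0 = 0.
Proof. by rewrite /N /B ip0l. Qed.

Lemma hnormE x : hnorm ip x = Num.sqrt (N x).
Proof. by []. Qed.
Lemma unitE x : (hnorm ip x = 1) <-> (N x = 1).
Proof.
rewrite hnormE; split => h; last by rewrite h sqrtr1.
by rewrite -[N x]sqr_sqrtr ?N_ge0 // h expr1n.
Qed.

Notation m := (lower_bound ip P).

Lemma m_ge0 : 0 <= m.
Proof.
rewrite /lower_bound.
have [ne|e] := pselect ([set hnorm ip (P x) | x in [set x | hnorm ip x = 1]] !=set0).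
  apply: lb_le_inf => // _ [x _ <-]; exact: sqrtr_ge0.
rewrite (_ : [set _ | _ in _] = set0) ?inf0 //.
by apply/seteqP; split => // y Sy; apply: e; exists y.
Qed.

Lemma m_le y : N y = 1 -> m <= hnorm ip (P y).
Proof.
move=> hy; apply: ge_inf; last by exists y => //; apply/unitE.
by exists 0 => _ [x _ <-]; exact: sqrtr_ge0.
Qed.

Lemma m2_le x : m^+2 * N x <= N (P x).
Proof.
apply: (@normalize_gen (fun x => N (P x))); first exact: NPZ.
move=> y /m_le; rewrite hnormE => h.
have := m_ge0 => h0.
by rewrite -[N (P y)]sqr_sqrtr ?N_ge0 // ler_pXn2r // ?nnegrE // sqrtr_ge0.
Qed.

Lemma mmC (a : R) : a%:C * a%:C = (a^+2)%:C.
Proof. by rewrite expr2; simpc. Qed.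

Lemma x_neq0 x : N x = 1 -> x != 0.
Proof. by move=> h; apply/eqP => e; move: h; rewrite e N0 => /eqP; rewrite eq_sym oner_eq0. Qed.

Lemma eig_of_Nstar : propNstar ip P -> is_eigenvalue P m%:C.
Proof.
case=> x0 [/unitE h1 h2].
have hP : N (P x0) = m^+2 by rewrite -[N (P x0)]sqr_sqrtr ?N_ge0 // -hnormE h2.
pose C := fun x => P (P x) - (m%:C * m%:C) *: x.
have CB u v : B (C u) v = B (P u) (P v) - m^+2 * B u v.
  by rewrite /C BDl BNl mmC BZl (Psa (P u) v).
have Cx0 : C x0 = 0.
  apply: kernel_gen.
  - by move=> u v; rewrite /C !PD scalerDr opprD addrACA.
  - by move=> c u; rewrite /C !PZ scalerBr !scalerA mulrC.
  - by move=> u v; rewrite CB (Bsym u (C v)) CB (Bsym (P v) (P u)) (Bsym v u).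
  - by move=> u; rewrite CB subr_ge0; exact: m2_le.
  - by rewrite CB -/(N (P x0)) -/(N x0) hP h1 mulr1 subrr.
have PPx : P (P x0) = (m%:C * m%:C) *: x0 by apply/eqP; rewrite -subr_eq0; apply/eqP.
have [y0|yn0] := eqVneq (P x0 + m%:C *: x0) 0.
  have Px : P x0 = - (m%:C *: x0) by apply/eqP; rewrite -addr_eq0; apply/eqP.
  have := Q_ge0 x0; rewrite /Q Px BNl BZl -/(N x0) h1 mulr1 oppr_ge0 => mle.
  have m0 : m = 0 by apply/eqP; rewrite eq_le mle m_ge0.
  exists x0; split; first exact: x_neq0.
  by rewrite Px m0 !scale0r oppr0.
exists (P x0 + m%:C *: x0); split => //.
by rewrite PD PZ PPx scalerDr scalerA addrC.
Qed.

Lemma eig_unit : is_eigenvalue P m%:C -> exists u, N u = 1 /\ P u = m%:C *: u.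
Proof.
case=> x [xn0 Px].
have Nx0 : N x != 0 by apply/eqP => /N_eq0 e; move: xn0; rewrite e eqxx.
set c := (Num.sqrt (N x))^-1.
have hc : c^+2 * N x = 1 by rewrite /c exprVn sqr_sqrtr ?N_ge0 // mulVf.
exists (c%:C *: x); split; first by rewrite NZ.
by rewrite PZ Px !scalerA mulrC.
Qed.

Lemma Nstar_of_eig : is_eigenvalue P m%:C -> propNstar ip P.
Proof.
move=> /eig_unit [u [hu Pu]]; exists u; split; first exact/unitE.
by rewrite hnormE Pu NZ hu mulr1 sqrtr_sqr ger0_norm // m_ge0.
Qed.

Lemma NB_expand u v : N (u + v) = N u + 2 * B u v + N v.
Proof. by rewrite /N BDl !BDr (Bsym v u); ring. Qed.
Lemma NB_expandN u v : N (u - v) = N u - 2 * B u v + N v.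
Proof. by rewrite /N BDl !BDr !BNl !BNr (Bsym v u); ring. Qed.

Lemma Q_ge_m (M : R) : (forall x, hnorm ip (P x) <= M * hnorm ip x) ->
  (exists e, N e = 1) -> forall y, N y = 1 -> m <= Q y.
Proof.
move=> HM [e he].
pose Wr := [set Q y | y in [set y | N y = 1]].
have Wne : Wr !=set0 by exists (Q e); exists e.
have Wlb : has_lbound Wr by exists 0 => _ [y _ <-]; exact: Q_ge0.
pose lam := inf Wr.
have lam0 : 0 <= lam by apply: lb_le_inf => // _ [y _ <-]; exact: Q_ge0.
have lamQ y : N y = 1 -> lam <= Q y by move=> hy; apply: ge_inf => //; exists y.
have lamQ' x : lam * N x <= Q x by apply: (@normalize_gen Q); [exact: QZ|exact: lamQ].
have [D DE] : {D : V -> V | forall x, D x = P x - lam%:C *: x}.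
  by exists (fun x => P x - lam%:C *: x).
have DB u v : B (D u) v = B (P u) v - lam * B u v by rewrite DE BDl BNl BZl.
have Ds u v : B (D u) v = B u (D v).
  by rewrite DB (Bsym u (D v)) DB (Psa u v) (Bsym (P v) u) (Bsym v u).
have Dp u : 0 <= B (D u) u by rewrite DB subr_ge0; exact: lamQ'.
have DD u v : D (u + v) = D u + D v by rewrite !DE PD scalerDr opprD addrACA.
have DZ c u : D (c%:C *: u) = c%:C *: D u by rewrite !DE PZ scalerBr !scalerA mulrC.
have NPM x : N (P x) <= M^+2 * N x.
  have := HM x; rewrite !hnormE => h.
  rewrite -[N (P x)]sqr_sqrtr ?N_ge0 // -[N x]sqr_sqrtr ?N_ge0 //.
  have := sqrtr_ge0 (N (P x)); have := sqrtr_ge0 (N x).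
  move: h; move: (Num.sqrt (N (P x))) (Num.sqrt (N x)) => s1 s2 h h1 h2; nra.
pose K := M^+2 + 1.
have K0 : 0 < K by rewrite /K ltr_pwDr // sqr_ge0.
have Dbound w : B (D w) w <= K * N w.
  rewrite DB.
  have := N_ge0 (P w - w); rewrite NB_expandN -/(Q w) => h.
  have := NPM w; have := N_ge0 w; have := lamQ' w; have := Q_ge0 w.
  rewrite /K -/(Q w) -/(N w).
  move: (Q w) (N w) (N (P w)) h => q n np h h1 h2 h3 h4.
  have := sqr_ge0 M; move: (M^+2) h4 => M2 h4 hM2; nra.
have key y : N (D y) <= K * B (D y) y.
  pose s := K^-1.
  have sK : s * K = 1 by rewrite /s mulVf // gt_eqF.
  have s0 : 0 < s by rewrite /s invr_gt0.
  have := Dp (y + (- s)%:C *: D y).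
  rewrite DD DZ !BDl !BDr !BZl !BZr (Ds (D y) y) -/(N (D y)).
  have := Dbound (D y); have := N_ge0 (D y).
  move: (B (D y) y) (N (D y)) (B (D (D y)) (D y)) => q n r h1 h2 h3.
  have e1 : s * K * n = n by rewrite sK mul1r.
  have e2 : s * s * (K * n) = s * n by rewrite mulrA -(mulrA s s K) sK mulr1.
  have e3 : s * s * r <= s * s * (K * n) by apply: ler_wpM2l => //; rewrite mulr_ge0 // ltW.
  have hq : s * n <= q by lra.
  have : K * (s * n) <= K * q by apply: ler_wpM2l => //; rewrite ltW.
  by rewrite mulrA (mulrC K s) sK mul1r.
have mlam : m <= lam.
  rewrite leNgt; apply/negP => lm.
  have l2 : 0 <= 2 * lam by rewrite mulr_ge0.
  have hK : 0 < K + 2 * lam by lra.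
  pose eps := (m^+2 - lam^+2) / (K + 2 * lam).
  have epsE : eps * (K + 2 * lam) = m^+2 - lam^+2 by rewrite /eps divfK // gt_eqF.
  have eps0 : 0 < eps.
    rewrite /eps divr_gt0 // subr_gt0 ltr_pXn2r // ?nnegrE //.
    exact: m_ge0.
  have := @inf_lt _ Wr (lam + eps) Wne.
  rewrite ltrDl => /(_ eps0) [_ [y hy <-]] hQ.
  have := m2_le y; rewrite hy mulr1.
  have -> : P y = D y + lam%:C *: y by rewrite DE subrK.
  rewrite NB_expand BZr NZ hy mulr1 DB -/(Q y) -/(N y) hy mulr1.
  have := key y; rewrite DB -/(Q y) -/(N y) hy mulr1.
  move: (Q y) (N (D y)) hQ => q n hQ h1 h2.
  have := m_ge0; nra.
by move=> y hy; apply: le_trans mlam (lamQ y hy).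
Qed.

Lemma cplx_lin (t a b : R) : t%:C * a%:C + (1 - t)%:C * b%:C = (t * a + (1 - t) * b)%:C.
Proof. by simpc. Qed.

Lemma extreme_of_Nstar (M : R) : (forall x, hnorm ip (P x) <= M * hnorm ip x) ->
  propNstar ip P -> extreme_point (num_range ip P) m%:C.
Proof.
move=> HM /eig_of_Nstar /eig_unit [u [hu Pu]].
have Qu : Q u = m by rewrite /Q Pu BZl -/(N u) hu mulr1.
have Qm := Q_ge_m HM (ex_intro _ u hu).
split; first by exists u; [exact/unitE | rewrite ipP Qu].
move=> _ _ t [ya /unitE hya <-] [yb /unitE hyb <-] /andP[t0 t1].
rewrite !ipP cplx_lin => /complexI E.
have := Qm _ hya; have := Qm _ hyb.
move: (Q ya) (Q yb) E => qa qb E ha hb.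
have ea : qa = m by nra.
have eb : qb = m by nra.
by rewrite ea eb.
Qed.

Lemma eig_from_form (C : V -> V) x :
  (forall u, C u = P u - m%:C *: u) \/ (forall u, C u = m%:C *: u - P u) ->
  (forall u, 0 <= B (C u) u) -> N x = 1 -> Q x = m -> propNstar ip P.
Proof.
move=> hC Cp hx Qx.
have Cx : C x = 0.
  apply: kernel_gen => //.
  - by case: hC => CE u v; rewrite !CE PD scalerDr ?opprD addrACA.
  - by case: hC => CE c u; rewrite !CE PZ ?scalerBr !scalerA mulrC.
  - by case: hC => CE u v; rewrite !CE ?BDl ?BDr ?BNl ?BNr ?BZl ?BZr (Psa u v).
  - case: hC => CE; rewrite CE ?BDl ?BNl ?BZl -/(Q x) -/(N x) hx Qx; lra.
apply: Nstar_of_eig; exists x; split; first exact: x_neq0.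
case: hC => CE; move: Cx; rewrite CE => /eqP; rewrite subr_eq0 => /eqP // <-.
Qed.

Lemma Nstar_of_extreme : extreme_point (num_range ip P) m%:C -> propNstar ip P.
Proof.
case=> -[x /unitE hx] Ex ext.
have Qx : Q x = m by apply: complexI; rewrite -ipP.
have [hmin|hmin] := pselect (forall y, N y = 1 -> m <= Q y).
  have [D DE] : {D : V -> V | forall u, D u = P u - m%:C *: u}.
    by exists (fun u => P u - m%:C *: u).
  apply: (@eig_from_form D x) => //; first by left.
  move=> u; rewrite DE BDl BNl BZl -/(Q u) -/(N u) subr_ge0.
  exact: (@normalize_gen Q m (QZ)).
have [hmax|hmax] := pselect (forall y, N y = 1 -> Q y <= m).
  have [D DE] : {D : V -> V | forall u, D u = m%:C *: u - P u}.
    by exists (fun u => m%:C *: u - P u).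
  apply: (@eig_from_form D x) => //; first by right.
  move=> u; rewrite DE BDl BNl BZl -/(Q u) -/(N u) subr_ge0.
  have h : - m * N u <= - Q u.
    apply: (@normalize_gen (fun v => - Q v) (- m)).
    - by move=> c v /=; rewrite QZ mulrN.
    - by move=> y /hmax /= h; rewrite lerN2.
  by move: h; move: (Q u) (N u) m => q n mm h; nra.
exfalso.
move/existsNP: hmin => [a /not_implyP [ha /negP]]; rewrite -ltNge => hQa.
move/existsNP: hmax => [b /not_implyP [hb /negP]]; rewrite -ltNge => hQb.
pose t := (Q b - m) / (Q b - Q a).
have hd : Q b - Q a != 0 by rewrite subr_eq0 gt_eqF // (lt_trans hQa).
have tE : t * (Q b - Q a) = Q b - m by rewrite /t divfK.
have t0 : 0 < t by rewrite /t divr_gt0 // subr_gt0 // (lt_trans hQa).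
have t1 : t < 1 by rewrite /t ltr_pdivrMr ?mul1r ?subr_gt0 ?(lt_trans hQa) // ltrD2l ltrN2.
have := ext (Q a)%:C (Q b)%:C t.
case.
- by exists a; [exact/unitE | rewrite ipP].
- by exists b; [exact/unitE | rewrite ipP].
- by rewrite t0 t1.
- rewrite cplx_lin; congr (_%:C); move: tE; move: (Q a) (Q b) => qa qb tE; nra.
- by move=> /complexI e _; move: hQa; rewrite e ltxx.
Qed.
End Basic.

Theorem proposition2p6 (R : realType) (V : lmodType R[i]) (ip : V -> V -> R[i])
    (P : V -> V) :
  is_hilbert ip -> bounded_linear ip P -> positive_op ip P ->
  (propNstar ip P <-> is_eigenvalue P (lower_bound ip P)%:C) /\
  (propNstar ip P <-> extreme_point (num_range ip P) (lower_bound ip P)%:C).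
Proof.
move=> [Hip _] [Pl [M HM]] Pp.
split; split.
- exact: (eig_of_Nstar Hip Pl Pp).
- exact: (Nstar_of_eig Hip Pl).
- exact: (extreme_of_Nstar Hip Pl Pp HM).
- exact: (Nstar_of_extreme Hip Pl Pp).
Qed.
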